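(* Let $S$ be a semigroup with finite $\mathcal{R}$-height whose kernel is completely simple, and let $A$ be a left ideal of $S$. Let $n$ be the maximum length of a chain of $\mathcal{R}$-classes of $S$ each of which intersects $A$. Then $\mathrm{H}_{\mathcal{R}}(A)\leq 2n-1$.
   Context: For a semigroup $S$, $S^1$ denotes $S$ with an identity adjoined if necessary. Green's preorder: $a\leq_{\mathcal{R}} b$ iff $aS^1\subseteq bS^1$; $\mathcal{R}$ is the associated equivalence. $\mathcal{R}$-classes are ordered by $R_a\leq R_b$ iff $a\leq_{\mathcal{R}} b$, and the $\mathcal{R}$-height $\mathrm{H}_{\mathcal{R}}(S)$ is the supremum of the cardinalities of chains of $\mathcal{R}$-classes. A left ideal is a non-empty subset $A$ with $SA\subseteq A$; $\mathrm{H}_{\mathcal{R}}(A)$ is computed in the semigroup $A$ itself. The kernel of $S$ is its unique minimal ideal. A semigroup is completely simple if it has no proper ideals and has both a minimal right ideal and a minimal left ideal. *)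

(* Defs.v *)
From Stdlib Require Import Arith.

Set Implicit Arguments.

Section Semigroups.
Variable T : Type.
Variable mul : T -> T -> T.

(* Green's R-preorder computed inside the subsemigroup with carrier P:
   a <=_R b  iff  a P^1 ⊆ b P^1, i.e. a = b or a = b c for some c in P. *)
Definition leR_in (P : T -> Prop) (a b : T) : Prop :=
  a = b \/ exists c, P c /\ a = mul b c.

Definition ltR_in (P : T -> Prop) (a b : T) : Prop :=
  leR_in P a b /\ ~ leR_in P b a.

(* A chain of k R-classes (computed in the semigroup with carrier P),
   given by representatives f 0 > f 1 > ... > f (k-1), all satisfying Q
   (i.e. each R-class meets Q). *)
Definition R_chain (P Q : T -> Prop) (f : nat -> T) (k : nat) : Prop :=
  (forall i, i < k -> Q (f i)) /\
  (forall i, S i < k -> ltR_in P (f (S i)) (f i)).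

Definition setT_S : T -> Prop := fun _ => True.

Definition R_height_le (P : T -> Prop) (m : nat) : Prop :=
  forall f k, R_chain P P f k -> k <= m.

Definition finite_R_height : Prop := exists m, R_height_le setT_S m.

Definition ideal_in (K I : T -> Prop) : Prop :=
  (exists x, I x) /\ (forall x, I x -> K x) /\
  (forall a x, K a -> I x -> I (mul a x) /\ I (mul x a)).

Definition right_ideal_in (K I : T -> Prop) : Prop :=
  (exists x, I x) /\ (forall x, I x -> K x) /\
  (forall a x, K a -> I x -> I (mul x a)).

Definition left_ideal_in (K I : T -> Prop) : Prop :=
  (exists x, I x) /\ (forall x, I x -> K x) /\
  (forall a x, K a -> I x -> I (mul a x)).

Definition minimal_right_ideal_in (K I : T -> Prop) : Prop :=
  right_ideal_in K I /\
  forall J, right_ideal_in K J -> (forall x, J x -> I x) -> forall x, I x -> J x.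

Definition minimal_left_ideal_in (K I : T -> Prop) : Prop :=
  left_ideal_in K I /\
  forall J, left_ideal_in K J -> (forall x, J x -> I x) -> forall x, I x -> J x.

Definition simple_in (K : T -> Prop) : Prop :=
  forall I, ideal_in K I -> forall x, K x -> I x.

Definition completely_simple_in (K : T -> Prop) : Prop :=
  simple_in K /\ (exists R, minimal_right_ideal_in K R) /\
  (exists L, minimal_left_ideal_in K L).

Definition is_kernel (K : T -> Prop) : Prop :=
  ideal_in setT_S K /\ forall I, ideal_in setT_S I -> forall x, K x -> I x.

Definition left_ideal (A : T -> Prop) : Prop := left_ideal_in setT_S A.

End Semigroups.

(* Main.v *)
Require Import Defs.
From Stdlib Require Import Arith Lia Classical.

Lemma K_regular (T : Type) (mul : T -> T -> T)
  (assoc : forall x y z, mul x (mul y z) = mul (mul x y) z)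
  (K : T -> Prop) (hK : ideal_in mul (@setT_S T) K)
  (hcs : completely_simple_in mul K) (a : T) :
  K a -> exists x, a = mul (mul a x) a.
Proof.
  intro Ka.
  destruct hcs as [hs [[R0 [[[r0 Hr0] [HR0K HR0cl]] HR0min]]
                        [L0 [[[l0 Hl0] [HL0K HL0cl]] HL0min]]]].
  destruct hK as [_ [_ hKcl]].
  assert (KM : forall u v, K u -> K (mul u v)).
  { intros u v Ku. exact (proj2 (hKcl v u I Ku)). }
  assert (Hs : exists s, a = mul (mul a a) s).
  { assert (HI : ideal_in mul K (fun y => exists k r, K k /\ R0 r /\ y = mul k r)).
    { split; [|split].
      - exists (mul r0 r0), r0, r0. split; [auto|]. split; auto.
      - intros y [k [r [Kk [Rr ->]]]]. apply KM; auto.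
      - intros b y Kb [k [r [Kk [Rr ->]]]]. split.
        + exists (mul b k), r. split; [apply KM; auto|]. split; auto.
        + exists k, (mul r b). split; [auto|split; [apply HR0cl; auto|symmetry; apply assoc]]. }
    destruct (hs _ HI a Ka) as [k [r [Kk [Rr Hkr]]]].
    assert (HJ : right_ideal_in mul K (fun r' => R0 r' /\ exists x, K x /\ mul k r' = mul (mul a a) x)).
    { split; [|split].
      - exists (mul r (mul a a)). split. apply HR0cl; [apply KM; auto|auto].
        exists a. split; auto. rewrite assoc, <- Hkr. rewrite <- !assoc. reflexivity.
      - intros y [Hy _]. auto.
      - intros b y Kb [Ry [x [Kx Hx]]]. split. apply HR0cl; auto.
        exists (mul x b). split. apply KM; auto. rewrite assoc, Hx, <- assoc. reflexivity. }
    destruct (HR0min _ HJ (fun y H => proj1 H) r Rr) as [_ [x [_ Hx]]].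
    exists x. rewrite <- Hx. exact Hkr. }
  assert (Ht : exists t, a = mul t (mul a a)).
  { assert (HI : ideal_in mul K (fun y => exists l k, L0 l /\ K k /\ y = mul l k)).
    { split; [|split].
      - exists (mul l0 l0), l0, l0. split; auto.
      - intros y [l [k [Ll [Kk ->]]]]. apply KM; auto.
      - intros b y Kb [l [k [Ll [Kk ->]]]]. split.
        + exists (mul b l), k. split; [apply HL0cl; auto|split; [auto|apply assoc]].
        + exists l, (mul k b). split; [auto|split; [apply KM; auto|symmetry; apply assoc]]. }
    destruct (hs _ HI a Ka) as [l [k [Ll [Kk Hlk]]]].
    assert (HJ : left_ideal_in mul K (fun l' => L0 l' /\ exists x, K x /\ mul l' k = mul x (mul a a))).
    { split; [|split].
      - exists (mul (mul a a) l). split. apply HL0cl; [apply KM; auto|auto].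
        exists a. split; auto. rewrite <- assoc, <- Hlk. rewrite <- !assoc. reflexivity.
      - intros y [Hy _]. auto.
      - intros b y Kb [Ly [x [Kx Hx]]]. split. apply HL0cl; auto.
        exists (mul b x). split. apply KM; auto. rewrite <- assoc, Hx, assoc. reflexivity. }
    destruct (HL0min _ HJ (fun y H => proj1 H) l Ll) as [_ [x [_ Hx]]].
    exists x. rewrite <- Hx. exact Hlk. }
  destruct Hs as [s Hs]. destruct Ht as [t Ht].
  exists t.
  assert (E1 : mul (mul (mul a t) (mul a a)) s = mul (mul a t) a).
  { rewrite <- (assoc (mul a t)), <- Hs. reflexivity. }
  assert (E2 : mul (mul (mul a t) (mul a a)) s = a).
  { rewrite <- (assoc a t), <- Ht. symmetry; exact Hs. }
  rewrite <- E2 at 1. rewrite E1. reflexivity.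
Qed.

Lemma leR_trans (T : Type) (mul : T -> T -> T)
  (assoc : forall x y z, mul x (mul y z) = mul (mul x y) z) a b c :
  leR_in mul (@setT_S T) a b -> leR_in mul (@setT_S T) b c -> leR_in mul (@setT_S T) a c.
Proof.
  intros [->|[u [_ ->]]] [->|[v [_ ->]]]; unfold leR_in.
  - auto.
  - right. exists v. split; [exact I|auto].
  - right. exists u. split; [exact I|auto].
  - right. exists (mul v u). split; [exact I|]. symmetry; apply assoc.
Qed.

Lemma chain_pred {T : Type} {mul : T -> T -> T} {P Q f k} :
  R_chain mul P Q f (S k) -> R_chain mul P Q f k.
Proof. intros [H1 H2]. split; intros; [apply H1|apply H2]; lia. Qed.

Lemma extend_chain (T : Type) (mul : T -> T -> T) (A : T -> Prop) g m x :
  R_chain mul (@setT_S T) A g m -> 1 <= m -> A x ->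
  ltR_in mul (@setT_S T) x (g (m-1)) ->
  R_chain mul (@setT_S T) A (fun i => if Nat.eqb i m then x else g i) (m+1).
Proof.
  intros [H1 H2] Hm Ax Hlt. split.
  - intros i Hi. destruct (Nat.eqb_spec i m); auto. apply H1; lia.
  - intros i Hi. destruct (Nat.eqb_spec (S i) m); destruct (Nat.eqb_spec i m); try lia.
    + replace i with (m-1) by lia. exact Hlt.
    + apply H2; lia.
Qed.

Lemma replace_chain (T : Type) (mul : T -> T -> T)
  (assoc : forall x y z, mul x (mul y z) = mul (mul x y) z) (A : T -> Prop) g m x :
  R_chain mul (@setT_S T) A g m -> 1 <= m -> A x ->
  leR_in mul (@setT_S T) x (g (m-1)) -> leR_in mul (@setT_S T) (g (m-1)) x ->
  R_chain mul (@setT_S T) A (fun i => if Nat.eqb i (m-1) then x else g i) m.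
Proof.
  intros [H1 H2] Hm Ax Hle Hge. split.
  - intros i Hi. destruct (Nat.eqb_spec i (m-1)); auto.
  - intros i Hi. destruct (Nat.eqb_spec (S i) (m-1)); destruct (Nat.eqb_spec i (m-1)); try lia.
    + destruct (H2 i Hi) as [Ha Hb]. rewrite e in Ha, Hb. split.
      * eapply leR_trans; eauto.
      * intro Hc. apply Hb. eapply leR_trans; eauto.
    + apply H2; lia.
Qed.

Definition regA {T : Type} (mul : T -> T -> T) (A : T -> Prop) a :=
  exists c, A c /\ a = mul a c.

Lemma claim (T : Type) (mul : T -> T -> T)
  (assoc : forall x y z, mul x (mul y z) = mul (mul x y) z)
  (K : T -> Prop) (hK : ideal_in mul (@setT_S T) K)
  (hreg : forall a, K a -> exists x, a = mul (mul a x) a)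
  (A : T -> Prop) (hA : left_ideal mul A) (f : nat -> T) :
  forall k, R_chain mul A A f (S k) ->
  exists g m, R_chain mul (@setT_S T) A g m /\ 1 <= m /\ g (m-1) = f k /\
    (k + 2 <= 2 * m \/ (k + 1 <= 2 * m /\ regA mul A (f k) /\ ~ K (f k))).
Proof.
  destruct hA as [_ [_ hAcl]].
  destruct hK as [_ [_ hKcl]].
  induction k as [|k IH]; intros Hc.
  - exists (fun _ => f 0), 1. split; [|split; [lia|split; [reflexivity|left; lia]]].
    split.
    + intros i Hi. apply (proj1 Hc). lia.
    + intros i Hi. lia.
  - destruct (IH (chain_pred Hc)) as [g [m [Hg [Hm [Hgm Hcase]]]]].
    assert (Hlt : ltR_in mul A (f (S k)) (f k)) by (apply (proj2 Hc); lia).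
    assert (Ax : A (f (S k))) by (apply (proj1 Hc); lia).
    assert (Ay : A (f k)) by (apply (proj1 Hc); lia).
    destruct Hlt as [Hle Hnge].
    assert (HleS : leR_in mul (@setT_S T) (f (S k)) (f k)).
    { destruct Hle as [->|[c [_ ->]]]; [left; auto|right; exists c; split; [exact I|auto]]. }
    set (x := f (S k)) in *. set (y := f k) in *.
    destruct (classic (leR_in mul (@setT_S T) y x)) as [Hyx|Hyx].
    +
      destruct Hyx as [Hyx|[t [_ Hyx]]].
      { exfalso. apply Hnge. left. exact Hyx. }
      destruct Hle as [Hxy|[c [Ac Hxy]]].
      { exfalso. apply Hnge. left. symmetry; exact Hxy. }
      assert (Hny : ~ regA mul A y).
      { intros [d [Ad Hd]]. apply Hnge. right. exists (mul t d).
        split. apply hAcl; [exact I|exact Ad]. rewrite assoc, <- Hyx. exact Hd. }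
      assert (Hrx : regA mul A x).
      { exists (mul t c). split. apply hAcl; [exact I|exact Ac].
        rewrite assoc, <- Hyx. exact Hxy. }
      assert (HnKx : ~ K x).
      { intro Kx. assert (Ky : K y) by (rewrite Hyx; apply (proj2 (hKcl t x I Kx))).
        destruct (hreg y Ky) as [z Hz]. apply Hny. exists (mul z y). split.
        apply hAcl; [exact I|exact Ay]. rewrite assoc. exact Hz. }
      destruct Hcase as [Hcase|[_ [Hr _]]]; [|contradiction].
      exists (fun i => if Nat.eqb i (m-1) then x else g i), m.
      split; [|split; [lia|split; [rewrite Nat.eqb_refl; reflexivity|right; split; [lia|split; auto]]]].
      apply replace_chain; auto.
      * rewrite Hgm. exact HleS.
      * rewrite Hgm. right. exists t. split; [exact I|exact Hyx].
    + exists (fun i => if Nat.eqb i m then x else g i), (m+1).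
      split; [|split; [lia|split; [replace (m+1-1) with m by lia; rewrite Nat.eqb_refl; reflexivity|left; lia]]].
      apply extend_chain; auto. rewrite Hgm. split; auto.
Qed.

Theorem theorem3p10 (S : Type) (mul : S -> S -> S)
  (assoc : forall x y z, mul x (mul y z) = mul (mul x y) z)
  (hfin : finite_R_height mul)
  (hker : exists K, is_kernel mul K /\ completely_simple_in mul K)
  (A : S -> Prop) (hA : left_ideal mul A)
  (n : nat)
  (hn_attained : exists f, R_chain mul (@setT_S S) A f n)
  (hn_max : forall f k, R_chain mul (@setT_S S) A f k -> k <= n) :
  R_height_le mul A (2 * n - 1).
Proof.
  destruct hker as [K [[HKid _] Hcs]].
  assert (hreg := fun a => K_regular S mul assoc K HKid Hcs a).
  intros f k' Hc. destruct k' as [|k]; [lia|].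
  destruct (claim S mul assoc K HKid hreg A hA f k Hc) as [g [m [Hg [Hm [Hgm Hcase]]]]].
  pose proof (hn_max g m Hg) as Hmn.
  destruct Hcase as [Hcase|[Hcase [_ HnK]]]; [lia|].
  destruct HKid as [[w0 Kw0] [_ HKcl]].
  destruct hA as [[a0 Aa0] [_ HAcl]].
  set (w := mul w0 a0).
  assert (Kw : K w) by (apply (proj2 (HKcl a0 w0 I Kw0))).
  assert (Aw : A w) by (apply HAcl; [exact I|exact Aa0]).
  set (z := mul (f k) w).
  assert (Kz : K z) by (apply (proj1 (HKcl (f k) w I Kw))).
  assert (Az : A z) by (apply HAcl; [exact I|exact Aw]).
  assert (Hext := extend_chain S mul A g m z Hg Hm Az).
  assert (Hlt : ltR_in mul (@setT_S S) z (g (m-1))).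
  { rewrite Hgm. split.
    - right. exists w. split; [exact I|reflexivity].
    - intros [He|[u [_ He]]]; apply HnK; rewrite He; [exact Kz|].
      apply (proj2 (HKcl u z I Kz)). }
  pose proof (hn_max _ _ (Hext Hlt)). lia.
Qed.
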